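(* Let $R$ be a commutative Noetherian ring with non-zero identity. Let $\mathcal{P}$ be a finite subset of $R$, and let $I$ be the ideal of $R$ generated by $\mathcal{P}$. Let $r \ge 0$ be an integer. Assume that there exist subsets $\mathcal{P}_0, \mathcal{P}_1, \ldots, \mathcal{P}_r$ of $\mathcal{P}$ such that: (SV1) $\mathcal{P} = \mathcal{P}_0 \cup \mathcal{P}_1 \cup \cdots \cup \mathcal{P}_r$; (SV2) $\mathcal{P}_0$ has exactly one element; (SV3) for each $\ell$ with $0 < \ell \le r$ and for every $a, a'' \in \mathcal{P}_\ell$ with $a \ne a''$, there exist an integer $\ell'$ with $0 \le \ell' < \ell$ and elements $a' \in \mathcal{P}_{\ell'}$ and $b \in I$ such that $a a'' = a' b$. Set $g_\ell = \sum_{a \in \mathcal{P}_\ell} a$ for $\ell = 0, 1, \ldots, r$. Then $J = (g_0, g_1, \ldots, g_r)$ is a reduction of $I$.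
   Context: An ideal $J \subseteq I$ is called a reduction of $I$ if there exists an integer $s \ge 1$ such that $I^{s+1} = J I^{s}$. *)

(* Defs.v *)
From HB Require Import structures.
From mathcomp Require Export all_boot all_order all_algebra.
From mathcomp Require Export finmap.
Set Implicit Arguments. Unset Strict Implicit. Unset Printing Implicit Defensive.
Import GRing.Theory.
Local Open Scope ring_scope.

Definition is_ideal (R : comNzRingType) (I : R -> Prop) : Prop :=
  [/\ I 0, (forall x y, I x -> I y -> I (x + y)) & (forall a x, I x -> I (a * x))].

Definition noetherian (R : comNzRingType) : Prop :=
  forall F : nat -> R -> Prop,
    (forall n, is_ideal (F n)) ->
    (forall n x, F n x -> F n.+1 x) ->
    exists N : nat, forall n x, (N <= n)%N -> F n x -> F N x.

Definition gen_ideal (R : comNzRingType) (S : R -> Prop) : R -> Prop :=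
  fun x => forall I, is_ideal I -> (forall s, S s -> I s) -> I x.

Definition ideal_mul (R : comNzRingType) (A B : R -> Prop) : R -> Prop :=
  gen_ideal (fun x => exists a b, [/\ A a, B b & x = a * b]).

Fixpoint ideal_pow (R : comNzRingType) (I : R -> Prop) (n : nat) : R -> Prop :=
  match n with
  | 0 => fun _ => True
  | n'.+1 => ideal_mul I (ideal_pow I n')
  end.

Definition is_reduction (R : comNzRingType) (J I : R -> Prop) : Prop :=
  (forall x, J x -> I x) /\
  exists s : nat, (1 <= s)%N /\
    forall x, ideal_pow I s.+1 x <-> ideal_mul J (ideal_pow I s) x.

(* Main.v *)
Require Import Defs.
Import GRing.Theory.
Local Open Scope ring_scope.
Local Open Scope fset_scope.
Set Implicit Arguments. Unset Strict Implicit.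

Lemma gen_ideal_ideal (R : comNzRingType) (S : R -> Prop) : is_ideal (gen_ideal S).
Proof.
split.
- by move=> I [H0 _ _] _.
- move=> x y Hx Hy I HI HS; case: (HI) => _ Hadd _.
  by apply: Hadd; [exact: Hx | exact: Hy].
- move=> a x Hx I HI HS; case: (HI) => _ _ Hmul.
  by apply: Hmul; exact: Hx.
Qed.

Lemma gen_ideal_in (R : comNzRingType) (S : R -> Prop) x : S x -> gen_ideal S x.
Proof. by move=> Sx I _ HS; apply: HS. Qed.

Lemma gen_ideal_min (R : comNzRingType) (S T : R -> Prop) x :
  is_ideal T -> (forall s, S s -> T s) -> gen_ideal S x -> T x.
Proof. by move=> HT HS Hx; apply: Hx. Qed.

Lemma gen_ideal_mono (R : comNzRingType) (S S' : R -> Prop) x :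
  (forall s, S s -> S' s) -> gen_ideal S x -> gen_ideal S' x.
Proof.
move=> HS; apply: gen_ideal_min; first exact: gen_ideal_ideal.
by move=> s /HS; apply: gen_ideal_in.
Qed.

Lemma ideal_mul_ideal (R : comNzRingType) (A B : R -> Prop) : is_ideal (ideal_mul A B).
Proof. exact: gen_ideal_ideal. Qed.

Lemma ideal_mul_in (R : comNzRingType) (A B : R -> Prop) a b :
  A a -> B b -> ideal_mul A B (a * b).
Proof. by move=> Aa Bb; apply: gen_ideal_in; exists a, b. Qed.

Lemma ideal_mul_min (R : comNzRingType) (A B T : R -> Prop) x :
  is_ideal T -> (forall a b, A a -> B b -> T (a * b)) -> ideal_mul A B x -> T x.
Proof.
move=> HT H; apply: gen_ideal_min => // s [a [b [Aa Bb ->]]]; exact: H.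
Qed.

Lemma ideal_mul_monoL (R : comNzRingType) (A A' B : R -> Prop) x :
  (forall y, A y -> A' y) -> ideal_mul A B x -> ideal_mul A' B x.
Proof.
move=> HA; apply: ideal_mul_min; first exact: ideal_mul_ideal.
by move=> a b /HA Aa Bb; apply: ideal_mul_in.
Qed.

Lemma lmul_ideal (R : comNzRingType) (T : R -> Prop) c :
  is_ideal T -> is_ideal (fun v => T (c * v)).
Proof.
case=> H0 Hadd Hmul; split.
- by rewrite mulr0.
- by move=> x y Hx Hy; rewrite mulrDr; apply: Hadd.
- by move=> a x Hx; rewrite mulrCA; apply: Hmul.
Qed.

Lemma colon_ideal (R : comNzRingType) (T B : R -> Prop) c :
  is_ideal T -> is_ideal (fun z => forall w, B w -> T (c * (z * w))).
Proof.
case=> H0 Hadd Hmul; split.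
- by move=> w _; rewrite mul0r mulr0.
- by move=> x y Hx Hy w Bw; rewrite mulrDl mulrDr; apply: Hadd; [apply: Hx|apply: Hy].
- by move=> a x Hx w Bw; rewrite -mulrA mulrCA; apply: Hmul; apply: Hx.
Qed.

Lemma rcolon_ideal (R : comNzRingType) (T B : R -> Prop) :
  is_ideal T -> is_ideal (fun z => forall w, B w -> T (z * w)).
Proof.
case=> H0 Hadd Hmul; split.
- by move=> w _; rewrite mul0r.
- by move=> x y Hx Hy w Bw; rewrite mulrDl; apply: Hadd; [apply: Hx|apply: Hy].
- by move=> a x Hx w Bw; rewrite -mulrA; apply: Hmul; apply: Hx.
Qed.

Lemma ideal_sub (R : comNzRingType) (T : R -> Prop) x y :
  is_ideal T -> T x -> T y -> T (x - y).
Proof. by case=> _ Hadd Hmul Tx Ty; rewrite -mulN1r; apply: Hadd => //; apply: Hmul. Qed.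

Lemma ideal_mul_min_l (R : comNzRingType) (A B T : R -> Prop) c x :
  is_ideal T -> (forall a b, A a -> B b -> T (c * (a * b))) -> ideal_mul A B x -> T (c * x).
Proof. move=> HT H Hx; exact: (ideal_mul_min (lmul_ideal c HT) H Hx). Qed.

Lemma pow_ideal (R : comNzRingType) (I : R -> Prop) n : is_ideal (ideal_pow I n).
Proof. case: n => [|n] /=; last exact: ideal_mul_ideal. by split. Qed.

Lemma step_lemma (R : comNzRingType) (I G G' : R -> Prop) a n :
  (forall x, G' x -> G x \/ x = a) -> I a ->
  ideal_mul (gen_ideal G) I (a * a) ->
  (forall x, ideal_pow I n.+1 x -> ideal_mul (gen_ideal G') (ideal_pow I n) x) ->
  forall x, ideal_pow I n.+2 x -> ideal_mul (gen_ideal G) (ideal_pow I n.+1) x.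
Proof.
move=> HG' Ia Ha Hn.
set T := ideal_mul (gen_ideal G) (ideal_pow I n.+1).
have HT : is_ideal T by exact: ideal_mul_ideal.
have k1 : forall z w, gen_ideal G z -> ideal_pow I n.+1 w -> T (z * w).
  by move=> z w Hz Hw; apply: ideal_mul_in.
have k0 : forall u w, ideal_mul (gen_ideal G) I u -> ideal_pow I n w -> T (u * w).
  move=> u w Hu Hw; move: w Hw.
  have := @ideal_mul_min _ (gen_ideal G) I (fun z => forall w, ideal_pow I n w -> T (z * w)) u
    (@rcolon_ideal _ T (ideal_pow I n) HT); apply => //.
  move=> k i Hk Hi w Hw; rewrite -mulrA; apply: k1 => //.
  exact: ideal_mul_in.
have k2 : forall v, ideal_pow I n.+1 v -> T (a * v).
  move=> v /Hn Hv; apply: (ideal_mul_min_l HT _ Hv) => z w Hz Hw.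
  move: w Hw.
  have := @gen_ideal_min _ G' (fun z => forall w, ideal_pow I n w -> T (a * (z * w))) z
    (@colon_ideal _ T (ideal_pow I n) a HT); apply => // s /HG' [Gs|->] w Hw.
  - rewrite mulrCA; apply: k1; first exact: gen_ideal_in.
    exact: ideal_mul_in.
  - by rewrite mulrA; apply: k0.
move=> x Hx; apply: (ideal_mul_min HT _ Hx) => i y Hi /Hn Hy.
apply: (ideal_mul_min_l HT _ Hy) => z w Hz Hw.
move: w Hw.
have := @gen_ideal_min _ G' (fun z => forall w, ideal_pow I n w -> T (i * (z * w))) z
  (@colon_ideal _ T (ideal_pow I n) i HT); apply => // s /HG' [Gs|->] w Hw.
- rewrite mulrCA; apply: k1; first exact: gen_ideal_in.
  exact: ideal_mul_in.
- rewrite mulrCA; apply: k2; exact: ideal_mul_in.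
Qed.

Definition Good (R : comNzRingType) (I G : R -> Prop) :=
  exists n, forall x, ideal_pow I n.+1 x -> ideal_mul (gen_ideal G) (ideal_pow I n) x.

Lemma Good_mono (R : comNzRingType) (I G G' : R -> Prop) :
  (forall x, G x -> G' x) -> Good I G -> Good I G'.
Proof.
move=> HG [n Hn]; exists n => x /Hn; apply: ideal_mul_monoL => y.
exact: gen_ideal_mono.
Qed.

Lemma Good_step (R : comNzRingType) (I G G' : R -> Prop) a :
  (forall x, G' x -> G x \/ x = a) -> I a ->
  ideal_mul (gen_ideal G) I (a * a) -> Good I G' -> Good I G.
Proof. by move=> H1 H2 H3 [n Hn]; exists n.+1; apply: (step_lemma H1 H2 H3 Hn). Qed.

Lemma shift_lemma (R : comNzRingType) (I K : R -> Prop) n :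
  (forall x, ideal_pow I n.+1 x -> ideal_mul K (ideal_pow I n) x) ->
  forall x, ideal_pow I n.+2 x -> ideal_mul K (ideal_pow I n.+1) x.
Proof.
move=> Hn x Hx.
have HT := ideal_mul_ideal K (ideal_pow I n.+1).
apply: (ideal_mul_min HT _ Hx) => i y Hi /Hn Hy.
apply: (ideal_mul_min_l HT _ Hy) => k w Hk Hw.
rewrite mulrCA; apply: ideal_mul_in => //; exact: ideal_mul_in.
Qed.

Unset Implicit Arguments. Set Strict Implicit.

Theorem theorem1p1 (R : comNzRingType) (hR : noetherian R)
  (P : {fset R}) (r : nat) (Ps : nat -> {fset R}) :
  let I := gen_ideal (fun x : R => x \in P) in
  (forall l, (l <= r)%N -> Ps l `<=` P) ->
  P = \big[@fsetU R/fset0]_(l < r.+1) Ps l ->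
  #|` Ps 0%N| = 1%N ->
  (forall l, (0 < l <= r)%N ->
     forall a a2, a \in Ps l -> a2 \in Ps l -> a != a2 ->
       exists l', (l' < l)%N /\
         exists a', a' \in Ps l' /\ exists b, I b /\ a * a2 = a' * b) ->
  let g := fun l : nat => \sum_(a <- Ps l) a in
  is_reduction (gen_ideal (fun x : R => exists l, (l <= r)%N /\ x = g l)) I.
Proof.
move=> I Hsub HP H1 HSV g.
set J := gen_ideal _.
have HI : is_ideal I by exact: gen_ideal_ideal.
have HJ : is_ideal J by exact: gen_ideal_ideal.
have IPs : forall l x, (l <= r)%N -> x \in Ps l -> I x.
  move=> l x Hl Hx; apply: gen_ideal_in; exact: (fsubsetP (Hsub l Hl)).
have Jg : forall l, (l <= r)%N -> J (g l).
  by move=> l Hl; apply: gen_ideal_in; exists l.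
have JI : forall x, J x -> I x.
  move=> x; apply: gen_ideal_min => // _ [l [Hl ->]].
  rewrite /g big_seq; apply: (big_ind I); [by case: HI | by case: HI |].
  move=> a Ha; exact: (IPs l a Hl Ha).
pose Gs (l : nat) (s : seq R) := fun x => J x \/ (exists l', (l' < l)%N /\ x \in Ps l') \/ x \in s.
have Hsq : forall l a, (0 < l <= r)%N -> a \in Ps l ->
    ideal_mul (gen_ideal (fun x => J x \/ exists l', (l' < l)%N /\ x \in Ps l')) I (a * a)%R.
  move=> l a Hl Ha.
  have Hlr : (l <= r)%N by case/andP: Hl.
  have Hga : (a * g l = a * a + \sum_(a2 <- Ps l | a2 != a) a * a2)%R.
    by rewrite /g mulr_sumr (bigD1_seq a) //=; exact: fset_uniq.
  have -> : (a * a = a * g l - \sum_(a2 <- Ps l | a2 != a) a * a2)%R.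
    by rewrite Hga addrK.
  have HK := ideal_mul_ideal (gen_ideal (fun x => J x \/ exists l', (l' < l)%N /\ x \in Ps l')) I.
  apply: (ideal_sub HK).
    rewrite mulrC; apply: ideal_mul_in; first by apply: gen_ideal_in; left; exact: Jg.
    exact: (IPs l a Hlr Ha).
  rewrite big_seq_cond; apply: (big_ind (ideal_mul _ I)).
  - by case: HK.
  - by case: HK.
  move=> a2 /andP [Ha2 Hne].
  have Hne' : a != a2 by rewrite eq_sym.
  have [l' [Hl' [a' [Ha' [b [Ib ->]]]]]] := HSV l Hl a a2 Ha Ha2 Hne'.
  apply: ideal_mul_in => //; apply: gen_ideal_in; right; by exists l'.
have Hdesc : forall l, (0 < l <= r)%N -> Good I (Gs l.+1 [::]) -> Good I (Gs l [::]).
  move=> l Hl HG.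
  have Hs : forall s : seq R, {subset s <= Ps l} -> Good I (Gs l s) -> Good I (Gs l [::]).
    elim=> [//|a s IH] Hsb HGs; apply: IH.
      by move=> y Hy; apply: Hsb; rewrite in_cons Hy orbT.
    have Ha : a \in Ps l by apply: Hsb; rewrite in_cons eqxx.
    apply: (Good_step (G' := Gs l (a :: s)) (a := a)) => //.
    - move=> x [Jx|[[l' Hl']|]]; [by left; left|by left; right; left; exists l'|].
      by rewrite in_cons => /orP [/eqP ->|xs]; [right|left; right; right].
    - by apply: (IPs l) => //; case/andP: Hl.
    - apply: ideal_mul_monoL (Hsq l a Hl Ha) => y; apply: gen_ideal_mono.
      by move=> z [Jz|Hz]; [left|right; left].
  apply: (Hs (Ps l)) => //.
  apply: Good_mono HG => x [Jx|[[l' [Hl' Hx]]|//]]; first by left.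
  rewrite ltnS leq_eqVlt in Hl'; case/orP: Hl' => [/eqP El'|Hl'].
    by right; right; rewrite -El'.
  by right; left; exists l'.
have Hbase : Good I (Gs r.+1 [::]).
  exists 0%N => x /= Hx; apply: ideal_mul_monoL Hx => y; apply: gen_ideal_mono.
  move=> z; rewrite HP => /bigfcupP [i _ Hz]; right; left; by exists i.
have Hall : forall k, (k <= r)%N -> Good I (Gs (r.+1 - k)%N [::]).
  elim=> [|k IH] Hk; first by rewrite subn0.
  have Hk' : (k < r)%N by [].
  rewrite subSS; apply: Hdesc; first by rewrite subn_gt0 Hk' leq_subr.
  by rewrite -subSn; [exact: IH (ltnW Hk') | exact: ltnW Hk'].
have [n Hn] := Hall r (leqnn r).
have HKJ : forall x, gen_ideal (Gs (r.+1 - r)%N [::]) x -> J x.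
  move=> y; apply: (gen_ideal_min HJ) => x [Jx|[[l' [Hl' Hx]]|//]] //.
  have [p0 E0] : exists p0, Ps 0%N = [fset p0] by apply/cardfs1P; rewrite H1.
  rewrite subSn // subnn ltnS leqn0 in Hl'; move/eqP: Hl' => El'.
  move: Hx; rewrite El' E0 in_fset1 => /eqP ->.
  have := Jg 0%N (leq0n r); by rewrite /g E0 big_seq_fset1.
split=> //; exists n.+1; split=> // x; split.
- move=> Hx; apply: ideal_mul_monoL (shift_lemma Hn Hx) => y; exact: HKJ.
- move=> Hx; apply: ideal_mul_monoL Hx => y; exact: JI.
Qed.
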